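(* Let $G$ be a full 1-plane graph satisfying the kite-edge standing assumption, and let $S$ be a minimal separating set of $G$. Then every transition face $F$ of $G^\times$ has, on its boundary walk, at least two occurrences of vertices of $S$ (either two distinct vertices of $S$, or two incidences with the same vertex of $S$).
   Context: A 1-plane graph is a graph $G$ with a good drawing in the plane (edges are simple curves; two edges intersect only at a common endpoint or a proper crossing; any two edges intersect at most once; no three edges cross at one point) in which every edge is crossed at most once. For a crossing of edges $(u,v)$ and $(w,x)$, its endpoints are $u,v,w,x$; two endpoints are consecutive if they are not $\{u,v\}$ and not $\{w,x\}$. $G$ is full 1-plane if for every crossing every two consecutive endpoints are adjacent. The planarization $G^\times$ replaces each crossing point by a new dummy vertex adjacent to the four endpoints. An edge joining consecutive endpoints $u,x$ of a crossing with dummy vertex $c$ is a kite edge if it is uncrossed and $G^\times$ has a face bounded exactly by it and $(u,c),(c,x)$. Standing assumption: for every crossing and every pair of adjacent consecutive endpoints, some edge joining them is a kite edge of that crossing. A separating set $S\subseteq V(G)$ is one with $G-S$ disconnected; the flaps are the connected components of $G-S$. A face $F$ of $G^\times$ is a transition face (with respect to $S$) if $F$ is incident to an edge of $G^\times$ both of whose endpoints are in $S$, or $F$ is incident to vertices from two different flaps of $G-S$. *)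

(* Defs.v *)
From mathcomp Require Import all_boot.
Set Implicit Arguments. Unset Strict Implicit. Unset Printing Implicit Defensive.

Section OnePlane.
(* V = real vertices of G, C = crossings (dummy vertices of G^x),
   D = darts (half-edges) of G^x.  alpha = edge involution, sigma = rotation
   around a vertex, vtx d = the vertex of G^x at which dart d starts. *)
Variables (V C D : finType) (alpha sigma : D -> D) (vtx : D -> V + C).

(* face permutation: faces of G^x are the orbits of phi; the boundary walk of
   the face of z visits the corners vtx z, vtx (phi z), ... *)
Definition phi (d : D) : D := sigma (alpha d).

Definition dend (d : D) : V + C := vtx (alpha d).

Definition is_real (x : V + C) : bool := if x is inl _ then true else false.

Definition inS (S : {set V}) (x : V + C) : bool :=
  if x is inl u then u \in S else false.

Definition glink : rel D := fun d e => (e == alpha d) || (e == sigma d).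

(* (D, alpha, sigma, vtx) is a connected plane (genus 0) map without loops
   whose vertex set is exactly V + C. *)
Definition plane_map : Prop :=
  [/\ (forall d, alpha (alpha d) = d),
      (forall d, alpha d != d),
      injective sigma,
      (forall d e, (vtx d == vtx e) = fconnect sigma d e)
    & (forall x, exists d, vtx d = x)] /\
  [/\ (forall d, dend d != vtx d),
      (forall d e, connect glink d e)
    & #|V| + #|C| + fcard phi D = #|D| %/ 2 + 2].

(* every dummy vertex has degree 4, its neighbours are real vertices, and its
   four neighbours are pairwise distinct; the two edges of G crossing at c are
   the ones formed by rotation-opposite darts. *)
Definition crossings_ok : Prop :=
  forall d c, vtx d = inr c ->
    [/\ order sigma d = 4, is_real (dend d)
      & uniq [:: dend d; dend (sigma d); dend (sigma (sigma d));
                 dend (sigma (sigma (sigma d)))]].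

(* adjacency in G: an uncrossed edge u-v, or a crossed edge u-c-v where the two
   halves are opposite at the crossing c *)
Definition Gadj (u v : V) : bool :=
  [exists d, (vtx d == inl u) &&
     ((dend d == inl v) ||
      (~~ is_real (dend d) && (dend (sigma (sigma (alpha d))) == inl v)))].

Definition full : Prop :=
  forall d c u w, vtx d = inr c -> dend d = inl u -> dend (sigma d) = inl w ->
    Gadj u w.

Definition touches (z e : D) : bool :=
  [exists y, fconnect phi z y && ((y == e) || (y == alpha e))].

(* f is (a dart of) a kite edge of the crossing vtx d for the consecutive
   endpoints dend d, dend (sigma d): an uncrossed edge joining them such that
   some face of G^x is bounded exactly by it and the two half-edges at c. *)
Definition kite (d f : D) : bool :=
  [&& is_real (vtx f), is_real (dend f), vtx f == dend d,
      dend f == dend (sigma d) &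
      [exists z, [&& order phi z == 3, touches z f, touches z d
                   & touches z (sigma d)]]].

Definition kite_assumption : Prop :=
  forall d c u w, vtx d = inr c -> dend d = inl u -> dend (sigma d) = inl w ->
    Gadj u w -> exists f, kite d f.

Definition Srel (S : {set V}) : rel V :=
  fun u v => [&& u \notin S, v \notin S & Gadj u v].

Definition separating (S : {set V}) : Prop :=
  exists u v, [/\ u \notin S, v \notin S & ~~ connect (Srel S) u v].

Definition min_separating (S : {set V}) : Prop :=
  separating S /\ forall S' : {set V}, S' \proper S -> ~ separating S'.

Definition transition (S : {set V}) (z : D) : Prop :=
  (exists y, [/\ fconnect phi z y, inS S (vtx y) & inS S (dend y)]) \/
  (exists y1 y2 u1 u2,
      [/\ fconnect phi z y1, fconnect phi z y2, vtx y1 = inl u1, vtx y2 = inl u2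
        & [/\ u1 \notin S, u2 \notin S & ~~ connect (Srel S) u1 u2]]).

Definition S_occurrences (S : {set V}) (z : D) : nat :=
  #|[pred y | fconnect phi z y & inS S (vtx y)]|.

End OnePlane.

(* Main.v *)
Require Import Defs.
From mathcomp Require Import all_boot zify.
Set Implicit Arguments. Unset Strict Implicit. Unset Printing Implicit Defensive.

Section Proofs.
Variables (V C D : finType) (alpha sigma : D -> D) (vtx : D -> V + C).
Hypothesis HP : plane_map alpha sigma vtx.
Hypothesis HC : crossings_ok alpha sigma vtx.
Hypothesis HF : full alpha sigma vtx.

Let aa : forall d, alpha (alpha d) = d.
Proof. by case: HP => [[]]. Qed.
Let sinj : injective sigma.
Proof. by case: HP => [[]]. Qed.
Let vsig d : vtx (sigma d) = vtx d.
Proof.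
case: HP => [[_ _ _ H _] _]; apply/esym/eqP; rewrite H; exact: fconnect1.
Qed.
Lemma phi_inj : injective (phi alpha sigma).
Proof. move=> x y; rewrite /phi => /sinj H. by rewrite -(aa x) H aa. Qed.
Lemma vtx_phi d : vtx (phi alpha sigma d) = dend alpha vtx d.
Proof. by rewrite /phi vsig. Qed.

Lemma Gadj_direct d u v : vtx d = inl u -> dend alpha vtx d = inl v ->
  Gadj alpha sigma vtx u v.
Proof. move=> H1 H2; apply/existsP; exists d; by rewrite H1 H2 !eqxx. Qed.

Lemma Gadj_cross d u c w : vtx d = inl u -> dend alpha vtx d = inr c ->
  dend alpha vtx (phi alpha sigma d) = inl w -> Gadj alpha sigma vtx u w.
Proof.
move=> H1 H2 H3; apply: (HF (d := alpha d) (c := c)) => //.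
by rewrite /dend aa.
Qed.

Lemma real_of_cross d c : dend alpha vtx d = inr c -> exists u, vtx d = inl u.
Proof.
move=> H; have [_ + _] := HC H; rewrite /dend aa.
by case: (vtx d) => [u|//]; exists u.
Qed.

Lemma Gadj_sym u v : Gadj alpha sigma vtx u v -> Gadj alpha sigma vtx v u.
Proof.
case/existsP=> d /andP[/eqP Hd /orP[/eqP Hv|/andP[Hr /eqP Hv]]].
  by apply: (Gadj_direct (d := alpha d)); rewrite // /dend aa.
set e := sigma (sigma (alpha d)).
apply/existsP; exists (alpha e); apply/andP; split.
  by rewrite (_ : vtx (alpha e) = dend alpha vtx e) // Hv.
have He : vtx e = dend alpha vtx d by rewrite /e !vsig.
move: Hr; case Hc: (dend alpha vtx d) => [//|c] _.
have [H4 _ _] := HC Hc.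
have I4 : iter 4 sigma (alpha d) = alpha d by rewrite -H4 iter_order.
apply/orP; right; apply/andP; split.
  by rewrite {1}/dend aa He Hc.
rewrite aa /e.
have -> : sigma (sigma (sigma (sigma (alpha d)))) = alpha d by exact: I4.
by rewrite /dend aa Hd.
Qed.

Variable S : {set V}.

Lemma Srel_sym : symmetric (Srel alpha sigma vtx S).
Proof.
move=> u v; rewrite /Srel; apply/idP/idP => /and3P[a b c];
  by rewrite a b Gadj_sym.
Qed.

Lemma arc y a b u v :
  a < b -> vtx (iter a (phi alpha sigma) y) = inl u ->
  vtx (iter b (phi alpha sigma) y) = inl v -> u \notin S -> v \notin S ->
  (forall k, a < k < b -> ~~ inS S (vtx (iter k (phi alpha sigma) y))) ->
  connect (Srel alpha sigma vtx S) u v.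
Proof.
move=> ab Ha Hb uS vS Hk.
set f := fun k => iter k (phi alpha sigma) y.
have notS : forall k w, a <= k <= b -> vtx (f k) = inl w -> w \notin S.
  move=> k w /andP[k1 k2] Hw.
  case: (ltngtP a k) k1 => // [ak|eak] _; last by move: Ha; rewrite eak Hw => -[->].
  case: (ltngtP k b) k2 => // [kb|ekb] _; last by move: Hb; rewrite -ekb Hw => -[->].
  by have := Hk k; rewrite ak kb /= => /(_ isT); rewrite -/(f k) Hw.
suff: forall k, a <= k <= b -> forall w, vtx (f k) = inl w ->
  connect (Srel alpha sigma vtx S) u w.
  by move/(_ b); rewrite (ltnW ab) leqnn => /(_ isT v Hb).
elim/ltn_ind => k IH /andP[k1 k2] w Hw.
case: (ltngtP a k) k1 => // [ak|ek] _; last first.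
  by move: Ha; rewrite -/(f a) ek Hw => -[->]; exact: connect0.
case: k ak IH k2 Hw => // k ak IH k2 Hw.
have fS : f k.+1 = phi alpha sigma (f k) by rewrite /f iterS.
have wS : w \notin S by apply: (notS k.+1 w _ Hw); lia.
move: Hw; rewrite fS vtx_phi => Hw.
case Hk1: (vtx (f k)) => [w'|c].
  have w'S : w' \notin S by apply: (notS k w' _ Hk1); lia.
  apply: connect_trans (IH k (ltnSn _) _ w' Hk1) _; first by lia.
  apply: connect1; rewrite /Srel w'S wS /=; exact: Gadj_direct Hk1 Hw.
case: k ak IH k2 fS Hw Hk1 => [|k] ak IH k2 fS Hw Hk1.
  have a0 : a = 0 by lia.
  by move: Ha; rewrite a0 -/(f 0) Hk1.
have fS' : f k.+1 = phi alpha sigma (f k) by rewrite /f iterS.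
have ak' : a <= k.
  case: (eqVneq a k.+1) => [ea|nea]; last by lia.
  by move: Ha; rewrite ea Hk1.
have Hd : dend alpha vtx (f k) = inr c by rewrite -vtx_phi -fS'.
have [w'' Hw''] := real_of_cross Hd.
have w''S : w'' \notin S by apply: (notS k w'' _ Hw''); lia.
apply: connect_trans (IH k (ltnW (ltnSn _)) _ w'' Hw'') _.
  by lia.
apply: connect1; rewrite /Srel w''S wS /=.
by apply: (Gadj_cross Hw'' Hd); rewrite -fS'.
Qed.

End Proofs.

Theorem claim1 (V C D : finType) (alpha sigma : D -> D) (vtx : D -> V + C)
  (S : {set V}) :
  plane_map alpha sigma vtx ->
  crossings_ok alpha sigma vtx ->
  full alpha sigma vtx ->
  kite_assumption alpha sigma vtx ->
  min_separating alpha sigma vtx S ->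
  forall z : D, transition alpha sigma vtx S z ->
  2 <= S_occurrences alpha sigma vtx S z.
Proof.
move=> HP HC HF _ _ z.
have pinj := phi_inj HP.
have vsig : forall d, vtx (sigma d) = vtx d.
  case: (HP) => [[_ _ _ H _] _] d; apply/esym/eqP; rewrite H; exact: fconnect1.
case=> [[y [zy Hy1 Hy2]] | [y1 [y2 [u1 [u2 [zy1 zy2 H1 H2 [u1S u2S nc]]]]]]].
  apply/card_gt1P; exists y, (phi alpha sigma y).
  rewrite !inE zy Hy1 /= (vtx_phi HP) Hy2 (connect_trans zy (fconnect1 _ _)) /=.
  split=> //; apply/eqP=> E.
  case: (HP) => [_ [/(_ y) + _ _]]; by rewrite -(vtx_phi HP) -E eqxx.
set f := fun k => iter k (phi alpha sigma) y1.
have y12 : fconnect (phi alpha sigma) y1 y2.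
  by apply: connect_trans zy2; rewrite (fconnect_sym pinj).
set n := order (phi alpha sigma) y1.
set j := findex (phi alpha sigma) y1 y2.
have jn : j < n by exact: findex_max.
have fj : f j = y2 by exact: iter_findex.
have f0 : f 0 = y1 by [].
have fn : f n = y1 by exact: iter_order.
have j0 : 0 < j.
  case: j fj jn => // /= E _; move: H2; rewrite -E H1 => -[E']; subst u2.
  by rewrite connect0 in nc.
have inF : forall k, fconnect (phi alpha sigma) z (f k).
  by move=> k; apply: connect_trans zy1 (fconnect_iter _ _ _).
have ex : forall a b u v, a < b -> vtx (f a) = inl u -> vtx (f b) = inl v ->
    u \notin S -> v \notin S -> ~~ connect (Srel alpha sigma vtx S) u v ->
    exists k, a < k < b /\ inS S (vtx (f k)).
  move=> a b u v ab Ha Hb uS vS ncon.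
  case: (boolP [exists k : 'I_b, (a < k) && inS S (vtx (f k))]).
    by case/existsP=> k /andP[ak Hk]; exists k; rewrite ak ltn_ord.
  move/existsPn=> Hn; case/negP: ncon.
  apply: (arc HP HC HF ab Ha Hb uS vS) => k /andP[ak kb].
  by have := Hn (Ordinal kb); rewrite /= ak.
have [k1 [/andP[k1a k1b] Hk1]] := ex 0 j u1 u2 j0 H1 (etrans (congr1 vtx fj) H2) u1S u2S nc.
have nc' : ~~ connect (Srel alpha sigma vtx S) u2 u1.
  by rewrite (sym_connect_sym (Srel_sym HP HC S)).
have [k2 [/andP[k2a k2b] Hk2]] := ex j n u2 u1 jn (etrans (congr1 vtx fj) H2)
  (etrans (congr1 vtx fn) H1) u2S u1S nc'.
apply/card_gt1P; exists (f k1), (f k2); rewrite !inE !inF Hk1 Hk2; split=> //.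
apply/eqP=> E.
have := findex_iter (ltn_trans k1b jn); rewrite -/(f k1) E findex_iter // => E'.
by move: (ltn_trans k1b k2a); rewrite E' ltnn.
Qed.
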